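(* Let $L\subseteq\{a\}^*$ and let $b>0$ be an integer such that: for every $z\in L$ with $|z|\ge b$ there exist integers $p\ge 0$, $q$ with $|z|=p+q$, $0<q\le b$, and $a^{p+iq}\in L$ for all $i\ge 0$. Then for every $z\in L$ with $|z|\ge b$ there exist integers $k,p,q_0,\dots,q_k,i_0,\dots,i_k$ such that $z=a^{\,p+i_0q_0+\cdots+i_kq_k}$, where $0\le k<b$, $0\le p<b$, $0<q_j\le b$ for all $j\in\{0,\dots,k\}$, the numbers $q_0,\dots,q_k$ are pairwise distinct, and $i_j>0$ for all $j\in\{0,\dots,k\}$. In particular $z$ belongs to the language $L^{\langle p,q_0,\ldots,q_k\rangle}=\{a^{\,p+i_0q_0+\cdots+i_kq_k}\mid i_0>0,\dots,i_k>0\}$.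
   Context: $a^m$ denotes the word consisting of $m$ copies of the letter $a$; $|z|$ is the length of $z$. *)

(* Defs.v *)
(* Unary alphabet {a}: letters are the single inhabitant of
   [unit]; words over {a} are [seq unit]; a language is a predicate on words. *)
From mathcomp Require Import all_boot.
Set Implicit Arguments. Unset Strict Implicit. Unset Printing Implicit Defensive.

Definition letter := unit.
Definition a : letter := tt.
Definition word := seq letter.

Definition apow (m : nat) : word := nseq m a.

Definition language := word -> Prop.

(* Main.v *)
Require Import Defs.
From mathcomp Require Import all_boot.

Lemma word_apow (z : word) : z = apow (size z).
Proof. elim: z => [//|[] z IH] /=. by rewrite {1}IH. Qed.

Lemma sum_ind (e b : nat) : e < b -> \sum_(0 <= d < b) (d == e) * d.+1 = e.+1.
Proof.
move=> eb.
rewrite (bigD1_seq e) /=; last first.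
- exact: iota_uniq.
- by rewrite mem_index_iota.
rewrite eqxx mul1n big1 ?addn0 // => d /negbTE ->. by [].
Qed.

Lemma decomp (L : language) (b : nat)
  (hL : forall z : word, L z -> b <= size z ->
     exists p q : nat, size z = p + q /\ 0 < q <= b /\
       forall i : nat, L (apow (p + i * q))) :
  forall n, L (apow n) -> exists r (c : nat -> nat), r < b /\
     n = r + \sum_(0 <= d < b) c d * d.+1.
Proof.
elim/ltn_ind => n IH Ln.
case: (ltnP n b) => nb.
  exists n, (fun _ => 0); split => //.
  by rewrite big1 ?addn0.
have := hL _ Ln; rewrite size_nseq => /(_ nb) [p [q [En [/andP [q0 qb] Hi]]]].
have Lp : L (apow p) by have := Hi 0; rewrite mul0n addn0.
have pn : p < n by rewrite En -{1}(addn0 p) ltn_add2l.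
have [r [c [rb Ep]]] := IH p pn Lp.
exists r, (fun d => c d + (d == q.-1)); split => //.
rewrite (eq_bigr (fun d => c d * d.+1 + (d == q.-1) * d.+1)); last by move=> d _; rewrite mulnDl.
rewrite big_split /= sum_ind; last by rewrite prednK // (leq_trans _ qb).
rewrite prednK // En Ep. by rewrite addnA.
Qed.

Lemma convert (b n r : nat) (c : nat -> nat) : r < b ->
  n = r + \sum_(0 <= d < b) c d * d.+1 -> (exists d, d < b /\ 0 < c d) ->
  exists (k p : nat) (q i : 'I_k.+1 -> nat),
      n = p + \sum_(j < k.+1) i j * q j /\
      k < b /\ p < b /\
      (forall j, 0 < q j <= b) /\
      injective q /\
      (forall j, 0 < i j).
Proof.
move=> rb En [d0 [d0b cd0]].
set s := [seq d <- index_iota 0 b | 0 < c d].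
have Esum : \sum_(0 <= d < b) c d * d.+1 = \sum_(d <- s) c d * d.+1.
  rewrite big_filter [RHS]big_mkcond /=; apply: eq_bigr => d _.
  case: ifP => // /negbT; rewrite -eqn0Ngt => /eqP ->; by [].
have us : uniq s by rewrite filter_uniq // iota_uniq.
have ins : forall d, (d \in s) = (0 < c d) && (d < b).
  by move=> d; rewrite mem_filter mem_index_iota.
have szs : size s <= b.
  by rewrite size_filter (leq_trans (count_size _ _)) // size_iota subn0.
have d0s : d0 \in s by rewrite ins cd0 d0b.
move: Esum us ins szs d0s; case: s => [//|x s'] Esum us ins szs _.
exists (size s'), r, (fun j => (nth 0 (x :: s') j).+1), (fun j => c (nth 0 (x :: s') j)).
have memj : forall j : 'I_(size s').+1, nth 0 (x :: s') j \in x :: s'.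
  by move=> j; apply: mem_nth.
split; first by rewrite En Esum (big_nth 0) big_mkord.
split; first by [].
split; first by [].
split.
  by move=> j; have := memj j; rewrite ins => /andP [_ ->].
split.
  move=> j1 j2 /= [] /eqP; rewrite nth_uniq // => /eqP H; exact: val_inj.
by move=> j; have := memj j; rewrite ins => /andP [-> _].
Qed.

Theorem mainTheorem3 (L : language) (b : nat) (hb : 0 < b)
  (hL : forall z : word, L z -> b <= size z ->
     exists p q : nat, size z = p + q /\ 0 < q <= b /\
       forall i : nat, L (apow (p + i * q))) :
  forall z : word, L z -> b <= size z ->
    exists (k p : nat) (q i : 'I_k.+1 -> nat),
      z = apow (p + \sum_(j < k.+1) i j * q j) /\
      k < b /\ p < b /\
      (forall j, 0 < q j <= b) /\
      injective q /\
      (forall j, 0 < i j).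
Proof.
move=> z Lz zb.
have [p [q [En [/andP [q0 qb] Hi]]]] := hL z Lz zb.
have Lp : L (apow p) by have := Hi 0; rewrite mul0n addn0.
have [r [c [rb Ep]]] := @decomp L b hL p Lp.
have qb' : q.-1 < b by rewrite prednK // (leq_trans _ qb).
have [k [p' [qq [ii [E H]]]]] :=
  @convert b (size z) r (fun d => c d + (d == q.-1)) rb
    ltac:(rewrite (eq_bigr (fun d => c d * d.+1 + (d == q.-1) * d.+1)); [|by move=> d _; rewrite mulnDl]; rewrite big_split /= sum_ind // prednK // En Ep addnA //)
    ltac:(exists q.-1; split => //; rewrite eqxx addn1 //).
exists k, p', qq, ii; split => //.
by rewrite {1}(word_apow z) E.
Qed.
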